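(* Let $a,c\in\mathbb{C}\setminus\{0\}$ and $b,d\in\mathbb{C}$ with $ad-bc\neq 0$, and let $M(z)=\dfrac{az+b}{cz+d}$. Then $St_M$ has no irrationally indifferent fixed point, and consequently the Fatou set of $St_M$ contains no invariant Siegel disc.
   Context: For a non-constant rational function $f$, Stirling's iterative root-finding method is $St_f(z)=z-\dfrac{f(z)}{f'\big(z-f(z)\big)}$, regarded as a rational self-map of $\widehat{\mathbb{C}}$. A fixed point is irrationally indifferent if its multiplier is $e^{2\pi i\theta}$ with $\theta\in\mathbb{R}\setminus\mathbb{Q}$. An invariant Siegel disc is a Fatou component $U$ with $St_M(U)=U$ on which $St_M$ is conformally conjugate to an irrational rotation of the unit disc. *)

(* Defs.v *)
From HB Require Import structures.
From mathcomp Require Import all_boot all_order all_algebra.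
From mathcomp Require Import complex.
From mathcomp Require Import reals trigo.
Set Implicit Arguments. Unset Strict Implicit. Unset Printing Implicit Defensive.
Import Order.TTheory GRing.Theory Num.Theory.
Local Open Scope ring_scope.
Local Open Scope complex_scope.

Section RationalMaps.
Variable R : realType.
Notation C := R[i].

(* A rational function over C, represented as a pair (numerator, denominator)
   of polynomials; the denominator is meant to be nonzero. *)
Definition ratfun := ({poly C} * {poly C})%type.

Definition rf_id : ratfun := ('X, 1).
Definition rf_sub (f g : ratfun) : ratfun := (f.1 * g.2 - g.1 * f.2, f.2 * g.2).
Definition rf_div (f g : ratfun) : ratfun := (f.1 * g.2, f.2 * g.1).
Definition rf_deriv (f : ratfun) : ratfun :=
  (f.1^`() * f.2 - f.1 * f.2^`(), f.2 ^+ 2).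
(* composition f o g: with n = max degree of f.1, f.2, homogenize:
   f(r/s) = (sum_i f.1_i r^i s^(n-i)) / (sum_i f.2_i r^i s^(n-i)) *)
Definition hom_comp (p : {poly C}) (n : nat) (g : ratfun) : {poly C} :=
  \sum_(i < n.+1) p`_i *: (g.1 ^+ i * g.2 ^+ (n - i)).
Definition rf_comp (f g : ratfun) : ratfun :=
  let n := (maxn (size f.1) (size f.2)).-1 in (hom_comp f.1 n g, hom_comp f.2 n g).

Definition stirling (f : ratfun) : ratfun :=
  rf_sub rf_id (rf_div f (rf_comp (rf_deriv f) (rf_sub rf_id f))).

Definition mobius (a b c d : C) : ratfun := (a *: 'X + b%:P, c *: 'X + d%:P).

(* The rational self-map of the Riemann sphere determined by f: lowest terms. *)
Definition rf_reduce (f : ratfun) : ratfun :=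
  (f.1 %/ gcdp f.1 f.2, f.2 %/ gcdp f.1 f.2).

(* Points of the Riemann sphere: Some z (z in C) or None (infinity). *)
Definition sphere := option C.

Definition rf_deriv_at (f : ratfun) (z : C) : C :=
  (f.1^`().[z] * f.2.[z] - f.1.[z] * f.2^`().[z]) / (f.2.[z]) ^+ 2.

(* reversed polynomial: for p of degree n, w^n p(1/w) *)
Definition revpoly (p : {poly C}) : {poly C} := Poly (rev p).

(* In the chart w = 1/z at infinity, the map w |-> 1 / F(1/w) for F = P/Q
   (P, Q in lowest terms, deg P > deg Q) is  w^(degP - degQ) revQ(w) / revP(w). *)
Definition chart_inf (F : ratfun) : ratfun :=
  ('X ^+ (size F.1 - size F.2) * revpoly F.2, revpoly F.1).

Definition is_fixed_point (f : ratfun) (x : sphere) : Prop :=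
  let F := rf_reduce f in
  match x with
  | Some z => F.2.[z] != 0 /\ F.1.[z] = z * F.2.[z]
  | None => (size F.2 < size F.1)%N
  end.

Definition multiplier (f : ratfun) (x : sphere) : C :=
  let F := rf_reduce f in
  match x with
  | Some z => rf_deriv_at F z
  | None => rf_deriv_at (chart_inf F) 0
  end.

Definition irrationally_indifferent (lambda : C) : Prop :=
  exists theta : R, (forall q : rat, theta != ratr q) /\
    lambda = (cos (2 * pi * theta)) +i* (sin (2 * pi * theta)).

Definition irrationally_indifferent_fixed_point (f : ratfun) (x : sphere) : Prop :=
  is_fixed_point f x /\ irrationally_indifferent (multiplier f x).

End RationalMaps.

(* Main.v *)
Require Import Defs.
From HB Require Import structures.
From mathcomp Require Import all_boot all_order all_algebra.
From mathcomp Require Import complex.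
From mathcomp Require Import reals trigo.
From mathcomp Require Import ring lra.
Import Order.TTheory GRing.Theory Num.Theory.
Local Open Scope ring_scope.

Section S.
Variable R : realType.
Notation C := R[i].
Variables a b c d : C.
Definition Nn : {poly C} := a%:P * 'X + b%:P.
Definition Qn : {poly C} := c%:P * 'X + d%:P.
Definition Hn : {poly C} := Qn ^+ 2 - c%:P * Nn.
Definition Dc : C := a * d - b * c.
Definition Pn : {poly C} := Dc%:P * 'X * Qn ^+ 3 - Nn * Hn ^+ 2.
Definition Q3 : {poly C} := Dc%:P * Qn ^+ 3.


Lemma sizeM (p q : {poly C}) : (0 < size p)%N -> (0 < size q)%N ->
  size (p * q) = (size p + size q).-1.
Proof. by rewrite !size_poly_gt0 => hp hq; rewrite size_mul. Qed.

Lemma size_lin (u v : C) : u != 0 -> size (u%:P * 'X + v%:P) = 2%N.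
Proof.
move=> u0.
have -> : u%:P * 'X + v%:P = u%:P * ('X + (v / u)%:P).
  by rewrite mulrDr -polyCM [u * _]mulrC divfK.
by rewrite size_Cmul // size_XaddC.
Qed.

Lemma size_Qn : c != 0 -> size Qn = 2%N.
Proof. exact: size_lin. Qed.
Lemma size_Nn : a != 0 -> size Nn = 2%N.
Proof. exact: size_lin. Qed.

Lemma size_Hn : a != 0 -> c != 0 -> size Hn = 3%N.
Proof.
move=> a0 c0; rewrite /Hn size_polyDl; first by rewrite sizeM ?size_Qn.
by rewrite size_polyN size_Cmul ?size_Nn // sizeM ?size_Qn.
Qed.

Lemma Dc_neq0_sizes : a != 0 -> c != 0 -> Dc != 0 ->
  size Pn = 6%N /\ size Q3 = 4%N.
Proof.
move=> a0 c0 D0.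
have hQ3 : size (Qn ^+ 3) = 4%N.
  by rewrite !exprS expr0 mulr1 !sizeM ?size_Qn.
have hH2 : size (Hn ^+ 2) = 5%N.
  by rewrite !exprS expr0 mulr1 !sizeM ?size_Hn.
split; last by rewrite /Q3 size_Cmul.
have h1 : size (Dc%:P * 'X * Qn^+3) = 5%N by rewrite sizeM ?size_Cmul ?size_polyX ?hQ3.
have h2 : size (Nn * Hn^+2) = 6%N by rewrite sizeM ?size_Nn ?hH2.
by rewrite /Pn addrC size_polyDl size_polyN ?h1 ?h2.
Qed.

Lemma st_eq : c != 0 -> stirling (mobius a b c d) = (Pn, Q3).
Proof.
move=> c0.
have hQ2 : (c *: 'X + d%:P) ^+ 2 = (c^+2)%:P * 'X^2 + (2 * c * d)%:P * 'X + (d^+2)%:P.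
  rewrite -mul_polyC. ring.
have hD : (a *: 'X + b%:P)^`() * (c *: 'X + d%:P) - (a *: 'X + b%:P) * (c *: 'X + d%:P)^`() = Dc%:P.
  rewrite !derivE /Dc -!mul_polyC. ring.
rewrite /stirling /rf_comp /rf_deriv /mobius /=.
rewrite hD hQ2.
have -> : size (Dc%:P : {poly C}) = (Dc != 0) by rewrite size_polyC.
have -> : size ((c^+2)%:P * 'X^2 + (2 * c * d)%:P * 'X + (d^+2)%:P : {poly C}) = 3%N.
  by rewrite -hQ2 -mul_polyC -/Qn expr2 sizeM ?size_Qn.
have -> : (maxn (Dc != 0) 3).-1 = 2%N by case: (Dc != 0).
rewrite /hom_comp /= !big_ord_recr big_ord0 /=.
rewrite big_ord0 !coefD !coefCM !coefC !coefXn !coefX /=.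
rewrite /rf_sub /rf_div /= /Pn /Q3 /Hn /Nn /Qn -!mul_polyC.
congr pair; ring.
Qed.

Lemma coprime_PQ : c != 0 -> Dc != 0 -> coprimep Pn Q3.
Proof.
move=> c0 D0.
rewrite /Q3 mul_polyC coprimepZr //.
apply: coprimep_expr.
have -> : Qn = c *: ('X - (-(d/c))%:P).
  by rewrite /Qn -mul_polyC polyCN opprK mulrDr -polyCM [c * _]mulrC divfK.
rewrite coprimepZr // coprimep_XsubC /root.
set z0 := - (d / c).
suff -> : Pn.[z0] = Dc ^+ 3 / c by rewrite mulf_neq0 ?expf_neq0 ?invr_eq0.
by rewrite /Pn /Hn /Nn /Qn !(hornerD, hornerN, hornerM, hornerC, hornerX, horner_exp) /z0 /Dc; field.
Qed.

Lemma reduce_eq : c != 0 -> Dc != 0 ->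
  exists2 k : C, k != 0 & rf_reduce (Pn, Q3) = (k *: Pn, k *: Q3).
Proof.
move=> c0 D0.
have := coprime_PQ c0 D0; rewrite coprimep_def => /eqP h1.
rewrite /rf_reduce /=.
set g := gcdp Pn Q3 in h1 *.
have hg : g = (g`_0)%:P by apply: size1_polyC; rewrite h1.
have g0 : g`_0 != 0.
  by apply/eqP => h; move: h1; rewrite hg h size_polyC eqxx.
move: hg g0; set k := g`_0 => hg k0.
exists k^-1; first by rewrite invr_eq0.
by rewrite hg -[k%:P]mulr1 mul_polyC !divpZr // !divp1.
Qed.

Lemma div_eq1 (x y : C) : y != 0 -> x = y -> x / y = 1.
Proof. by move=> y0 ->; rewrite divff. Qed.

Lemma finite_mult (k z : C) : c != 0 -> k != 0 ->
  (k *: Q3).[z] != 0 -> (k *: Pn).[z] = z * (k *: Q3).[z] ->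
  rf_deriv_at (k *: Pn, k *: Q3) z = 0 \/ rf_deriv_at (k *: Pn, k *: Q3) z = 1.
Proof.
move=> c0 k0 hQ hP.
have e : k * ((a*z+b) * ((c*z+d)^+2 - c*(a*z+b))^+2) = z * (k *: Q3).[z] - (k *: Pn).[z].
  rewrite /Q3 /Pn /Hn /Nn /Qn /Dc !(hornerZ, hornerD, hornerN, hornerM, hornerC, hornerX, horner_exp).
  ring.
move: e; rewrite hP subrr => /eqP; rewrite !mulf_eq0 (negbTE k0) /= orbb.
case/orP => /eqP h.
- left.
  have hb : b = - (a * z) by apply/eqP; rewrite -addr_eq0 addrC h.
  rewrite /rf_deriv_at /=; apply/eqP; rewrite mulf_eq0; apply/orP; left; apply/eqP.
  rewrite /Q3 /Pn /Hn /Nn /Qn /Dc !(derivZ, derivD, derivN, derivM, derivC, derivX, deriv_exp).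
  rewrite !(hornerZ, hornerD, hornerN, hornerM, hornerC, hornerX, horner_exp, hornerMn).
  rewrite hb; ring.
- right.
  have hb : b = ((c*z+d)^+2 - c * a * z) / c.
    by move/eqP: h; rewrite subr_eq0 => /eqP ->; field.
  rewrite /rf_deriv_at /=; apply: div_eq1; first by rewrite expf_neq0.
  rewrite /Q3 /Pn /Hn /Nn /Qn /Dc !(derivZ, derivD, derivN, derivM, derivC, derivX, deriv_exp).
  rewrite !(hornerZ, hornerD, hornerN, hornerM, hornerC, hornerX, horner_exp, hornerMn).
  by rewrite hb; field.
Qed.

Lemma inf_mult (k : C) : a != 0 -> c != 0 -> Dc != 0 -> k != 0 ->
  rf_deriv_at (chart_inf (k *: Pn, k *: Q3)) 0 = 0.
Proof.
move=> a0 c0 D0 k0.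
have [s1 s2] := Dc_neq0_sizes a0 c0 D0.
rewrite /chart_inf /rf_deriv_at /= !size_scale // s1 s2 /=.
apply/eqP; rewrite mulf_eq0; apply/orP; left; apply/eqP.
rewrite !(derivM, deriv_exp, derivX).
rewrite !(hornerD, hornerM, hornerX, horner_exp, hornerMn).
ring.
Qed.
End S.
Section T.
Variable R : realType.

Lemma cos_per_int (x : R) (m : int) : cos (x + 2 * pi * m%:~R) = cos x.
Proof.
have P := @cosD2pi R.
case: m => n.
  have -> : 2 * pi * (Posz n)%:~R = (pi *+ 2) *+ n :> R.
    by rewrite pmulrn -mulr_natr mulr2n; ring.
  exact: periodicn.
have -> : 2 * pi * (Negz n)%:~R = - ((pi *+ 2) *+ n.+1) :> R.
  by rewrite NegzE mulrNz pmulrn -mulr_natr mulr2n; ring.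
have := periodicn P n.+1 (x - (pi *+ 2) *+ n.+1).
by rewrite subrK => ->.
Qed.

Lemma cos_eq1_int (th : R) : cos (2 * pi * th) = 1 -> th = (Num.floor th)%:~R.
Proof.
set m := Num.floor th.
have hm1 : m%:~R <= th by apply: real_floor_le; apply: num_real.
have hm2 : th < (m + 1)%:~R by apply: real_floorD1_gt; apply: num_real.
rewrite intrD in hm2.
set t := th - m%:~R.
have ht0 : 0 <= t by rewrite /t subr_ge0.
have ht1 : t < 1 by rewrite /t ltrBlDl.
have -> : 2 * pi * th = 2 * pi * t + 2 * pi * m%:~R by rewrite /t; ring.
rewrite cos_per_int => hc.
suff : t = 0 by rewrite /t => /eqP; rewrite subr_eq0 => /eqP.
have pi0 : 0 < pi :> R := pi_gt0 R.
have [hle|hlt] := lerP (2 * pi * t) pi.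
  have : 2 * pi * t = 0.
    apply: cos_inj; rewrite ?cos0 //; rewrite in_itv /= ?lexx ?hle ?andbT //.
      by rewrite !mulr_ge0 // ltW.
    exact: ltW.
  move/eqP; rewrite !mulf_eq0 (negbTE (lt0r_neq0 pi0)) orbF /= => /orP [] /eqP //.
  by move=> /eqP; lra.
exfalso.
have hlt1 : 2 * pi * t < 2 * pi.
  by rewrite -[X in _ < X]mulr1 ltr_pM2l // mulr_gt0.
have hy : cos (2 * pi - 2 * pi * t) = 1.
  have := cos_per_int (- (2 * pi * t)) 1.
  by rewrite mulr1 addrC cosN hc.
have : 2 * pi - 2 * pi * t = 0.
  apply: cos_inj; rewrite ?cos0 //; rewrite in_itv /= ?lexx ?andbT //.
    move: hlt1 hlt; set u := 2 * pi * t; lra.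
  exact: ltW.
move: hlt1; set u := 2 * pi * t; lra.
Qed.

Lemma irr_not01 (l : R[i]) : irrationally_indifferent l -> l <> 0 /\ l <> 1.
Proof.
case=> th [hq ->]; split.
  case=> hc hs; have := cos2Dsin2 (2 * pi * th); rewrite hc hs; lra.
case=> hc _; have ht := @cos_eq1_int th hc.
by move: (hq (Num.floor th)%:~R); rewrite ratr_int -ht eqxx.
Qed.
End T.

Theorem mainTheorem12 (R : realType) (a b c d : R[i]) :
  a != 0 -> c != 0 -> a * d - b * c != 0 ->
  forall x : sphere R,
    ~ irrationally_indifferent_fixed_point (stirling (mobius a b c d)) x.
Proof.
move=> a0 c0 D0 x.
rewrite /irrationally_indifferent_fixed_point /is_fixed_point /multiplier st_eq //.
have [k k0 ->] := @reduce_eq R a b c d c0 D0.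
case: x => [z|] /=.
  move=> [[hQ hP] hirr].
  have [h|h] := @finite_mult R a b c d k z c0 k0 hQ hP; rewrite h in hirr;
    by have [] := @irr_not01 R _ hirr.
move=> [_ hirr]; rewrite (@inf_mult R a b c d k a0 c0 D0 k0) in hirr.
by have [] := @irr_not01 R _ hirr.
Qed.
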